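(* Let $\Gamma_1,\Gamma_2$ be disjoint sets of unary letters and consider the following nondeterministic procedure on a context equation $u = v$. First, for each context variable $X$: guess a letter $a$ (intended as the last letter of a solution's value for $X$); if $a\in\Gamma_1$, replace every occurrence of $X$ by $Xa$ (i.e. each $X(s)$ by $X(a(s))$), and then guess whether $X$ is to be removed, in which case replace every $X(s)$ by $s$. Second, for each context variable $X$ and each variable $x$: guess a letter $b$ (intended as its first letter); if $b\in\Gamma_2$, replace every occurrence of $X$ by $bX$ (each $X(s)$ by $b(X(s))$), respectively every $x$ by $b(x)$, and then (for context variables) guess whether $X$ is to be removed, in which case replace each $X(s)$ by $s$. Then: (a) whatever the choices, if the resulting equation $u'=v'$ has a solution, so does $u=v$; (b) if $u=v$ has a non-empty solution $\sigma$, then for some choices the resulting equation $u'=v'$ has a non-empty solution $\sigma'$ such that $\sigma'(u')=\sigma(u)$ and $\Gamma_1,\Gamma_2$ is a non-crossing partition with respect to $\sigma'$.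
   Context: $\Sigma$ is a ranked signature, $\Omega\notin\Sigma$ a special constant; context variables have arity $1$, variables arity $0$. Ground terms, ground contexts (exactly one $\Omega$), terms and context equations $u=v$ are as usual; a substitution $\sigma$ assigns ground contexts to context variables and ground terms to variables, extended by $\sigma(a)=a$, $\sigma(f(t_1,\dots,t_m))=f(\sigma(t_1),\dots,\sigma(t_m))$, $\sigma(Xt)=\sigma(X)\sigma(t)$; a solution satisfies $\sigma(u)=\sigma(v)$; it is non-empty if $\sigma(X)\neq\Omega$ for every context variable $X$ occurring in the equation. The first letter of $\sigma(X)$ or $\sigma(x)$ is the label of its root; the last letter of $\sigma(X)$ is the label of the father of $\Omega$. Each node of $\sigma(u)$ comes either from an explicit letter occurrence of $u$ or from $\sigma(X)$ or $\sigma(x)$ for a particular occurrence of $X$ or $x$. An occurrence in $\sigma(u)$ or $\sigma(v)$ of a node labelled $a$ with child labelled $b$ is explicit if both come from explicit letters, implicit if both come from the same $\sigma(X)$ or $\sigma(x)$, and crossing otherwise. $\Gamma_1,\Gamma_2$ is non-crossing w.r.t. $\sigma$ if no $a\in\Gamma_1$, $b\in\Gamma_2$ have a crossing occurrence of $ab$. *)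

(* Defs.v *)
From mathcomp Require Import all_boot.
From Stdlib Require List.
Set Implicit Arguments. Unset Strict Implicit. Unset Printing Implicit Defensive.

(* Labelled ordered trees; [Hole] is the special constant Omega (not a  *)
(* letter of the signature).                                           *)
Inductive tree (L : Type) : Type :=
| Node : L -> seq (tree L) -> tree L
| Hole : tree L.
Arguments Hole {L}.

Fixpoint plug (L : Type) (c s : tree L) : tree L :=
  match c with
  | Hole => s
  | Node l ts => Node l (map (fun c' => plug c' s) ts)
  end.

Fixpoint map_tree (L L' : Type) (f : L -> L') (t : tree L) : tree L' :=
  match t with
  | Hole => Hole
  | Node l ts => Node (f l) (map (map_tree f) ts)
  end.

Definition root_label (L : Type) (t : tree L) : option L :=
  match t with Hole => None | Node l _ => Some l end.

Fixpoint edges (L : Type) (t : tree L) : seq (L * L) :=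
  match t with
  | Hole => [::]
  | Node l ts =>
      (fix go (ts : seq (tree L)) : seq (L * L) :=
         match ts with
         | [::] => [::]
         | c :: r =>
             match root_label c with
             | Some l' => (l, l') :: edges c
             | None => edges c
             end ++ go r
         end) ts
  end.

Fixpoint holes (L : Type) (t : tree L) : nat :=
  match t with
  | Hole => 1
  | Node _ ts => sumn (map (@holes L) ts)
  end.

Section Terms.
Variables (Sigma V CV : Type) (arity : Sigma -> nat).

Fixpoint ranked (t : tree Sigma) : Prop :=
  match t with
  | Hole => True
  | Node f ts => size ts = arity f /\
      (fix go (ts : seq (tree Sigma)) : Prop :=
         match ts with [::] => True | c :: r => ranked c /\ go r end) ts
  end.

Definition ground_term (t : tree Sigma) : Prop := ranked t /\ holes t = 0.
Definition ground_context (t : tree Sigma) : Prop := ranked t /\ holes t = 1.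

Inductive term : Type :=
| Var : V -> term
| CApp : CV -> term -> term
| App : Sigma -> seq term -> term.

Fixpoint wf_term (t : term) : Prop :=
  match t with
  | Var _ => True
  | CApp _ s => wf_term s
  | App f ts => size ts = arity f /\
      (fix go (ts : seq term) : Prop :=
         match ts with [::] => True | c :: r => wf_term c /\ go r end) ts
  end.

Fixpoint occurs_cv (X : CV) (t : term) : Prop :=
  match t with
  | Var _ => False
  | CApp Y s => Y = X \/ occurs_cv X s
  | App _ ts =>
      (fix go (ts : seq term) : Prop :=
         match ts with [::] => False | c :: r => occurs_cv X c \/ go r end) ts
  end.

Record subst : Type := Subst {
  sctx : CV -> tree Sigma;
  svar : V -> tree Sigma
}.

Definition admissible (s : subst) : Prop :=
  (forall X, ground_context (sctx s X)) /\ (forall x, ground_term (svar s x)).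

Fixpoint apply (s : subst) (t : term) : tree Sigma :=
  match t with
  | Var x => svar s x
  | CApp X u => plug (sctx s X) (apply s u)
  | App f ts => Node f (map (apply s) ts)
  end.

Definition solution (s : subst) (u v : term) : Prop :=
  admissible s /\ apply s u = apply s v.

Definition nonempty (s : subst) (u v : term) : Prop :=
  forall X, occurs_cv X u \/ occurs_cv X v -> sctx s X <> Hole.

(* Origin of a node of sigma(u): an explicit letter of u, or the value
   of the (context) variable occurrence at the given position of u. *)
Inductive origin : Type :=
| Explicit : origin
| FromOcc : seq nat -> origin.

(* sigma(u), each node annotated with its origin; [p] is the position *)
Fixpoint aapply (s : subst) (p : seq nat) (t : term) : tree (Sigma * origin) :=
  match t with
  | Var x => map_tree (fun a => (a, FromOcc p)) (svar s x)
  | CApp X u => plug (map_tree (fun a => (a, FromOcc p)) (sctx s X))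
                     (aapply s (rcons p 0) u)
  | App f ts => Node (f, Explicit)
      ((fix go (i : nat) (ts : seq term) : seq (tree (Sigma * origin)) :=
          match ts with
          | [::] => [::]
          | c :: r => aapply s (rcons p i) c :: go i.+1 r
          end) 0 ts)
  end.

(* an occurrence of ab is crossing iff the two nodes have different
   origins (explicit = both explicit; implicit = same occurrence) *)
Definition crossing_in (s : subst) (t : term) (a b : Sigma) : Prop :=
  exists o1 o2, List.In ((a, o1), (b, o2)) (edges (aapply s [::] t)) /\ o1 <> o2.

Definition noncrossing (G1 G2 : pred Sigma) (s : subst) (u v : term) : Prop :=
  forall a b, G1 a -> G2 b -> ~ crossing_in s u a b /\ ~ crossing_in s v a b.

Record choices : Type := Choices {
  last_letter : CV -> Sigma;
  remove1 : CV -> bool;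
  first_letter : CV -> Sigma;
  remove2 : CV -> bool;
  first_letter_var : V -> Sigma
}.

Fixpoint phase1 (G1 : pred Sigma) (c : choices) (t : term) : term :=
  match t with
  | Var x => Var x
  | App f ts => App f (map (phase1 G1 c) ts)
  | CApp X s =>
      let s' := phase1 G1 c s in
      if G1 (last_letter c X) then
        let s'' := App (last_letter c X) [:: s'] in
        if remove1 c X then s'' else CApp X s''
      else CApp X s'
  end.

Fixpoint phase2 (G2 : pred Sigma) (c : choices) (t : term) : term :=
  match t with
  | Var x => if G2 (first_letter_var c x) then App (first_letter_var c x) [:: Var x]
             else Var x
  | App f ts => App f (map (phase2 G2 c) ts)
  | CApp X s =>
      let s' := phase2 G2 c s in
      if G2 (first_letter c X) then
        App (first_letter c X) [:: if remove2 c X then s' else CApp X s']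
      else CApp X s'
  end.

Definition transform (G1 G2 : pred Sigma) (c : choices) (t : term) : term :=
  phase2 G2 c (phase1 G1 c t).

End Terms.

(* Main.v *)
Require Import Defs.
From mathcomp Require Import all_boot.
From Stdlib Require List.
Set Implicit Arguments. Unset Strict Implicit. Unset Printing Implicit Defensive.

Section TreeL.
Variable L : Type.

Definition tree_ind' (P : tree L -> Prop) (HH : P Hole)
  (HN : forall l ts, (forall t, List.In t ts -> P t) -> P (Node l ts)) : forall t, P t :=
  fix F t := match t with
  | Hole => HH
  | Node l ts => HN l ts ((fix G ts : forall t, List.In t ts -> P t :=
       match ts with
       | [::] => fun t (H : List.In t [::]) => match H with end
       | c :: r => fun t H => match H with
                   | or_introl E => eq_ind c P (F c) t E
                   | or_intror H' => G r t H' end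
       end) ts)
  end.

Lemma In_le_sumn (A : Type) (f : A -> nat) c ts : List.In c ts -> f c <= sumn (map f ts).
Proof.
elim: ts => [|d r IH] //= [->|H]; first exact: leq_addr.
apply: leq_trans (IH H) _; exact: leq_addl.
Qed.

Lemma map_ext_In (A B : Type) (f g : A -> B) s : (forall x, List.In x s -> f x = g x) -> map f s = map g s.
Proof. elim: s => [|x s IH] //= H; rewrite H ?IH //; [move=> y Hy; apply: H|]; by [right|left]. Qed.

Lemma holes_node l ts : holes (Node l ts) = sumn (map (@holes L) ts).
Proof. by []. Qed.

Lemma plug_node (l : L) ts D : plug (Node l ts) D = Node l (map (fun c => plug c D) ts).
Proof. by []. Qed.

Lemma plug0 (t D : tree L) : holes t = 0 -> plug t D = t.
Proof.
elim/tree_ind': t => [//|l ts IH] /= H.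
congr Node; rewrite -{2}(map_id ts); apply: map_ext_In => c Hc.
apply: IH => //; apply/eqP; rewrite -leqn0 -H; exact: (In_le_sumn (@holes L)).
Qed.

Lemma holes_plug (C D : tree L) : holes (plug C D) = holes C * holes D.
Proof.
elim/tree_ind': C => [|l ts IH] /=; first by rewrite mul1n.
elim: ts IH => [|c r IHr] IH //=.
rewrite mulnDl IH; last by left.
by rewrite IHr // => t Ht; apply: IH; right.
Qed.

Lemma plug_assoc (A B C : tree L) : plug (plug A B) C = plug A (plug B C).
Proof.
elim/tree_ind': A => [//|l ts IH] /=; congr Node.
rewrite -map_comp; apply: map_ext_In => c Hc /=; exact: IH.
Qed.

Inductive hole_father : tree L -> L -> Prop :=
| HF_here l ts : List.In Hole ts -> hole_father (Node l ts) l
| HF_deep l ts c l' : List.In c ts -> hole_father c l' -> hole_father (Node l ts) l'.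

Lemma hole_father_nodeE l ts l' : hole_father (Node l ts) l' ->
  (l' = l /\ List.In Hole ts) \/ exists c, List.In c ts /\ hole_father c l'.
Proof. move=> H; inversion H; subst; [left|right; exists c]; by split. Qed.

Lemma hole_father_hole l : ~ hole_father Hole l.
Proof. by move=> H; inversion H. Qed.

Lemma hole_father_holes t l : hole_father t l -> 0 < holes t.
Proof.
move=> H; elim: H => [l0 ts H|l0 ts c l' H _ IH] /=.
- exact: (In_le_sumn (@holes L) H).
- apply: leq_trans IH _; exact: (In_le_sumn (@holes L) H).
Qed.

Lemma edges_nil l : edges (Node l [::]) = [::] :> seq (L * L).
Proof. by []. Qed.

Lemma edges_cons (l : L) c r : edges (Node l (c :: r)) =
  (match root_label c with Some l' => (l,l') :: edges c | None => edges c end) ++ edges (Node l r).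
Proof. by []. Qed.

Lemma edges_NodeP (l : L) ts e : List.In e (edges (Node l ts)) ->
  exists c, List.In c ts /\ ((exists l', root_label c = Some l' /\ e = (l, l')) \/ List.In e (edges c)).
Proof.
elim: ts => [|c r IH] //; rewrite edges_cons => H0; case: (List.in_app_or _ _ _ H0) => H.
- exists c; split; first by left.
  case: (root_label c) H => [l'|] H; last by right.
  case: H => [<-|H]; [left; by exists l'|by right].
- have [c' [H1 H2]] := IH H; exists c'; split => //; by right.
Qed.

Lemma edges_Node_root (l : L) ts c l' : List.In c ts -> root_label c = Some l' ->
  List.In (l, l') (edges (Node l ts)).
Proof.
elim: ts => [|d r IHr] //; rewrite edges_cons => [[<-|H']] Hr.
- by rewrite Hr; left.
- apply: List.in_or_app; right; exact: IHr.
Qed.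

Lemma edges_Node_sub (l : L) ts c e : List.In c ts -> List.In e (edges c) ->
  List.In e (edges (Node l ts)).
Proof.
elim: ts => [|d r IHr] //; rewrite edges_cons => [[<-|H']] He.
- apply: List.in_or_app; left; case: (root_label d) => //; by right.
- apply: List.in_or_app; right; exact: IHr.
Qed.

Lemma edges_plug (C D : tree L) e : List.In e (edges (plug C D)) ->
  List.In e (edges C) \/ List.In e (edges D) \/
  exists l r, hole_father C l /\ root_label D = Some r /\ e = (l, r).
Proof.
elim/tree_ind': C => [|l ts IH]; first by right; left.
rewrite plug_node; move/edges_NodeP => [c' [Hc' H]].
have [c [Hc E]] : exists c, List.In c ts /\ c' = plug c D.
  elim: ts Hc' {IH} => [|d r IHr] //= [<-|H']; first by exists d; split => //; left.
  have [c [H1 H2]] := IHr H'; exists c; split => //; by right.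
subst c'; clear Hc'.
case: H => [[l' [Hr ->]]|H].
- case: c Hc Hr => [l0 ts0|] Hc /= Hr.
  + case: Hr => <-; left; exact: (edges_Node_root _ Hc).
  + right; right; exists l, l'; split => //; exact: HF_here.
- have [H1|[H1|[l1 [r1 [H1 [H2 ->]]]]]] := IH c Hc H.
  + left; exact: (edges_Node_sub _ Hc).
  + by right; left.
  + right; right; exists l1, r1; split => //; exact: (HF_deep _ Hc).
Qed.

End TreeL.

Lemma In_map_inv (A B : Type) (g : A -> B) y s : List.In y (map g s) -> exists x, List.In x s /\ y = g x.
Proof.
elim: s => [|x s IH] //= [<-|H]; first by exists x; split => //; left.
have [z [H1 H2]] := IH H; exists z; split => //; by right.
Qed.

Lemma In_map (A B : Type) (g : A -> B) x s : List.In x s -> List.In (g x) (map g s).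
Proof. elim: s => [|y s IH] //= [->|H]; [by left|right; exact: IH]. Qed.

Lemma sumn0_In (A : Type) (f : A -> nat) s c : sumn (map f s) = 0 -> List.In c s -> f c = 0.
Proof. move=> H Hc; apply/eqP; rewrite -leqn0 -H; exact: In_le_sumn. Qed.

Section MapTree.
Variables (L L' : Type) (f : L -> L').

Lemma root_map t : root_label (map_tree f t) = omap f (root_label t).
Proof. by case: t. Qed.

Lemma edges_map t e : List.In e (edges (map_tree f t)) ->
  exists e0, List.In e0 (edges t) /\ e = (f e0.1, f e0.2).
Proof.
elim/tree_ind': t => [//|l ts IH].
move=> H0; have [c' [Hc' H]] := edges_NodeP H0.
have [c [Hc E]] := In_map_inv Hc'; subst c'.
case: H => [[l'' [Hr ->]]|H].
- rewrite root_map in Hr; case E: (root_label c) Hr => [l0|] //= [<-].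
  exists (l, l0); split => //; exact: (edges_Node_root _ Hc).
- have [e0 [H1 H2]] := IH c Hc H; exists e0; split => //; exact: (edges_Node_sub _ Hc).
Qed.

Lemma hole_father_map C l' : hole_father (map_tree f C) l' ->
  exists l, hole_father C l /\ l' = f l.
Proof.
elim/tree_ind': C => [|l ts IH] /= H; first by inversion H.
case: (hole_father_nodeE H) => [[-> H0]|[c [H2 H3]]].
- exists l; split => //; apply: HF_here.
  have [x [H1 H2]] := In_map_inv H0; case: x H1 H2 => //.
- have [x [H1 H4]] := In_map_inv H2; subst c.
  have [l0 [H4 H5]] := IH x H1 H3; exists l0; split => //; exact: (HF_deep _ H1).
Qed.

End MapTree.

Section Ranked.
Variables (Sigma : Type) (arity : Sigma -> nat).

Lemma ranked_nodeE f ts : ranked arity (Node f ts) <->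
  size ts = arity f /\ (forall c, List.In c ts -> ranked arity c).
Proof.
rewrite /=; split => [[H1 H2]|[H1 H2]]; split => //.
- elim: ts {H1} H2 => [|d r IH] //= [Hd Hr] c [<-|Hc] //; exact: IH.
- elim: ts {H1} H2 => [|d r IH] //= H; split; [apply: H; by left|apply: IH => c Hc; apply: H; by right].
Qed.

Lemma ranked_plug A B : ranked arity A -> ranked arity B -> ranked arity (plug A B).
Proof.
elim/tree_ind': A => [//|l ts IH] HA HB; case/ranked_nodeE: HA => H1 H2.
rewrite plug_node; apply/ranked_nodeE; split; first by rewrite size_map.
move=> c Hc; have [x [Hx E]] := In_map_inv Hc; subst c; apply: IH => //; exact: H2.
Qed.

Lemma gc_plug A B : ground_context arity A -> ground_context arity B -> ground_context arity (plug A B).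
Proof. move=> [H1 H2] [H3 H4]; split; [exact: ranked_plug|by rewrite holes_plug H2 H4]. Qed.

Lemma gt_plug A B : ground_context arity A -> ground_term arity B -> ground_term arity (plug A B).
Proof. move=> [H1 H2] [H3 H4]; split; [exact: ranked_plug|by rewrite holes_plug H2 H4]. Qed.

Lemma gc_node1 a t : arity a = 1 -> ground_context arity t -> ground_context arity (Node a [:: t]).
Proof. by move=> Ha [H1 H2]; split; [split|rewrite /= H2]. Qed.

Lemma gt_node1 a t : arity a = 1 -> ground_term arity t -> ground_term arity (Node a [:: t]).
Proof. by move=> Ha [H1 H2]; split; [split|rewrite /= H2]. Qed.

Lemma gc_hole : ground_context arity Hole.
Proof. by []. Qed.

Lemma split1 (ts : seq (tree Sigma)) : sumn (map (@holes _) ts) = 1 ->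
  exists ts1 c ts2, ts = ts1 ++ c :: ts2 /\ holes c = 1 /\
    sumn (map (@holes _) ts1) = 0 /\ sumn (map (@holes _) ts2) = 0.
Proof.
elim: ts => [|c r IH] //=.
case E: (holes c) => [|[|k]] //=.
- rewrite add0n => /IH [ts1 [c' [ts2 [-> [H1 [H2 H3]]]]]].
  by exists (c :: ts1), c', ts2; rewrite /= E H2.
- move=> [H]; exists [::], c, r; split => //; split => //.
Qed.

Lemma dec1 (P : pred Sigma) (HP : forall a, P a -> arity a = 1) C :
  ground_context arity C ->
  (exists C1 a, P a /\ C = plug C1 (Node a [:: Hole]) /\ ground_context arity C1) \/
  (forall l, hole_father C l -> ~~ P l).
Proof.
elim/tree_ind': C => [_|l ts IH [Hr Hh]]; first by right => l H; inversion H.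
move/ranked_nodeE: Hr => [Hs Hr].
have [ts1 [c [ts2 [Ets [Hc [H1 H2]]]]]] := split1 Hh.
have Hin : forall c', List.In c' ts -> 0 < holes c' -> c' = c.
  move=> c' Hc' Hp; rewrite Ets in Hc'; case: (List.in_app_or _ _ _ Hc') => [H|[E|H]].
  - by rewrite (sumn0_In H1 H) in Hp.
  - by [].
  - by rewrite (sumn0_In H2 H) in Hp.
have cin : List.In c ts by rewrite Ets; apply: List.in_or_app; right; left.
case: c Hc Ets Hin cin => [l0 ts0|] Hc Ets Hin cin.
- have gc : ground_context arity (Node l0 ts0) by split => //; apply: Hr.
  case: (IH _ cin gc) => [[C1 [a [Pa [E gC1]]]]|HR].
  + left; exists (Node l (ts1 ++ C1 :: ts2)), a; split => //; split.
    * rewrite plug_node map_cat /= -E Ets; congr Node; congr (_ ++ _ :: _).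
      - rewrite -{1}(map_id ts1); apply: map_ext_In => x Hx; rewrite plug0 //; exact: sumn0_In H1 Hx.
      - rewrite -{1}(map_id ts2); apply: map_ext_In => x Hx; rewrite plug0 //; exact: sumn0_In H2 Hx.
    * split.
      - apply/ranked_nodeE; split; first by rewrite -Hs Ets !size_cat.
        move=> x Hx0; case: (List.in_app_or _ _ _ Hx0) => [Hx|[<-|Hx]]; [|by case: gC1|]; apply: Hr; rewrite Ets;
          apply: List.in_or_app; [by left|by right; right].
      - by rewrite /= map_cat sumn_cat /= H1 H2; case: gC1 => _ ->.
  + right => l' H0; case: (hole_father_nodeE H0) => [[_ H3]|[c0 [H4 H5]]].
    * by have := Hin _ H3 is_true_true.
    * have E := Hin _ H4 (hole_father_holes H5); subst c0; exact: HR.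
- case Pl: (P l).
  + left; exists Hole, l; split => //; split => //.
    have := HP _ Pl; rewrite -Hs Ets size_cat /=.
    case: ts1 {H1 Hin Ets cin} => [|? ?] /=.
    * by case: ts2 {H2} => [|? ?].
    * by move=> /eqP; rewrite addSn addnS.
  + right => l' H0; case: (hole_father_nodeE H0) => [[-> _]|[c0 [H4 H5]]]; first by rewrite Pl.
    by have E := Hin _ H4 (hole_father_holes H5); subst c0; inversion H5.
Qed.

End Ranked.

From Stdlib Require Import IndefiniteDescription.

Set Bullet Behavior "Strict Subproofs".

Section Main.
Variables (Sigma V CV : Type) (arity : Sigma -> nat) (G1 G2 : pred Sigma).
Hypothesis HG1 : forall a, G1 a -> arity a = 1.
Hypothesis HG2 : forall a, G2 a -> arity a = 1.
Hypothesis Hdisj : forall a, G1 a -> G2 a -> False.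

Notation term := (term Sigma V CV).
Notation subst := (subst Sigma V CV).
Notation choices := (choices Sigma V CV).

Definition term_ind' (P : term -> Prop) (HV : forall x, P (Var _ _ x))
  (HC : forall X w, P w -> P (CApp X w))
  (HA : forall f ts, (forall t, List.In t ts -> P t) -> P (App f ts)) : forall t, P t :=
  fix F t := match t with
  | Var x => HV x
  | CApp X w => HC X w (F w)
  | App f ts => HA f ts ((fix G ts : forall t, List.In t ts -> P t :=
       match ts with
       | [::] => fun t (H : List.In t [::]) => match H with end
       | c :: r => fun t H => match H with
                   | or_introl E => eq_ind c P (F c) t E
                   | or_intror H' => G r t H' end
       end) ts)
  end.

Lemma occurs_cons X f c r : occurs_cv X (App f (c :: r) : term) = (occurs_cv X c \/ occurs_cv X (App f r)).
Proof. by []. Qed.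

Lemma occurs_AppE X f ts : occurs_cv X (App f ts : term) -> exists c, List.In c ts /\ occurs_cv X c.
Proof.
elim: ts => [|c r IH] //; rewrite occurs_cons => [[H|H]]; first by exists c; split => //; left.
have [c' [H1 H2]] := IH H; exists c'; split => //; by right.
Qed.

Lemma occurs_App X f ts c : List.In c ts -> occurs_cv X c -> occurs_cv X (App f ts : term).
Proof.
elim: ts => [|d r IH] //; rewrite occurs_cons => [[<-|H]] Hc; [by left|right; exact: IH].
Qed.

Definition Kc b r2 (C' : tree Sigma) :=
  if G2 b then Node b [:: if r2 then Hole else C'] else C'.

Definition Rc a r1 b r2 (C' : tree Sigma) :=
  if G1 a then (if r1 then Node a [:: Hole] else plug (Kc b r2 C') (Node a [:: Hole]))
  else Kc b r2 C'.

Definition Rv b (t : tree Sigma) := if G2 b then Node b [:: t] else t.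

Definition Rctx (c : choices) X C' :=
  Rc (last_letter c X) (remove1 c X) (first_letter c X) (remove2 c X) C'.

Lemma apply_transform (c : choices) (s s' : subst) t :
  (forall X, occurs_cv X t -> sctx s X = Rctx c X (sctx s' X)) ->
  (forall x, svar s x = Rv (first_letter_var c x) (svar s' x)) ->
  apply s' (transform G1 G2 c t) = apply s t.
Proof.
move=> HX Hx; elim/term_ind': t HX => [x|X w IH|f ts IH] HX.
- rewrite /transform /= Hx /Rv; by case: (G2 _).
- have E := HX X (or_introl erefl).
  have IH' := IH (fun Y H => HX Y (or_intror H)).
  move: IH'; rewrite /transform /= E /Rctx /Rc /Kc.
  case: (G1 (last_letter c X)); case: (remove1 c X) => /=; case: (G2 (first_letter c X)); case: (remove2 c X) => /= IH';
    by rewrite ?plug_assoc /= IH'.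
- rewrite /transform /= -!map_comp; congr Node; apply: map_ext_In => t Ht /=.
  apply: IH => // X H; apply: HX; exact: occurs_App Ht H.
Qed.


Lemma part_a (c : choices) (u v : term) :
  (exists s' : subst, solution arity s' (transform G1 G2 c u) (transform G1 G2 c v)) ->
  exists s : subst, solution arity s u v.
Proof.
move=> [s' [[HXc Hxt] E]].
pose s := Subst (fun X => Rctx c X (sctx s' X)) (fun x => Rv (first_letter_var c x) (svar s' x)).
have Hs1 : forall t, apply s t = apply s' (transform G1 G2 c t).
  by move=> t; rewrite (@apply_transform c s s').
exists s; split; last by rewrite !Hs1.
split => [X|x] /=.
- rewrite /Rctx /Rc /Kc.
  case Ha: (G1 (last_letter c X)); case: (remove1 c X);
  case Hb: (G2 (first_letter c X)); case: (remove2 c X).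
  all: try by repeat (apply: gc_hole || apply: HXc || (apply: HG1; done) || (apply: HG2; done) || apply: gc_node1 || apply: gc_plug).
- rewrite /Rv; case Hb: (G2 (first_letter_var c x)); last exact: Hxt.
  apply: gt_node1; [exact: HG2|exact: Hxt].
Qed.

Fixpoint rootG2 (s : subst) (t : term) : Prop :=
  match t with
  | Var x => match root_label (svar s x) with Some l => G2 l | None => False end
  | CApp X w => match sctx s X with Hole => rootG2 s w | Node l _ => G2 l end
  | App f _ => G2 f
  end.

Fixpoint nonexpl (s : subst) (t : term) : Prop :=
  match t with
  | Var x => match root_label (svar s x) with Some l => G2 l | None => False end
  | CApp X w => match sctx s X with Hole => nonexpl s w | Node l _ => G2 l end
  | App f _ => False
  end.

Inductive Inv (s : subst) : term -> Prop :=
| IVar x : Inv s (Var Sigma CV x)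
| ICApp X w : Inv s w -> (forall l, hole_father (sctx s X) l -> G1 l -> ~ rootG2 s w) ->
    Inv s (CApp X w)
| IApp f ts : (forall c, List.In c ts -> Inv s c) ->
    (G1 f -> forall c, List.In c ts -> ~ nonexpl s c) -> Inv s (App f ts).

Fixpoint aargs (s : subst) (p : seq nat) (i : nat) (ts : seq term) : seq (tree (Sigma * origin)) :=
  match ts with
  | [::] => [::]
  | c :: r => aapply s (rcons p i) c :: aargs s p i.+1 r
  end.

Lemma aapply_App s p f ts : aapply s p (App f ts) = Node (f, Explicit) (aargs s p 0 ts).
Proof. simpl; congr Node; elim: ts 0 => [|c r IH] i //=; by rewrite IH. Qed.

Lemma In_aargs s p i ts T : List.In T (aargs s p i ts) ->
  exists c q, List.In c ts /\ T = aapply s q c /\ size p < size q.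
Proof.
elim: ts i => [|c r IH] i //= [<-|H].
- by exists c, (rcons p i); split; [left|rewrite size_rcons].
- have [c' [q [H1 [H2 H3]]]] := IH _ H; exists c', q; split => //; by right.
Qed.

Lemma root_aapply s p t l o : root_label (aapply s p t) = Some (l, o) ->
  (G2 l -> rootG2 s t) /\ (G2 l -> o <> Explicit -> nonexpl s t) /\
  (forall r, o = FromOcc r -> size p <= size r).
Proof.
elim: t p => [x|X w IH|f ts] p /=.
- rewrite root_map; case: (root_label (svar s x)) => //= l0 [<- <-].
  by split => //; split => // r [<-].
- case: (sctx s X) => [l0 ts0|] /=.
  + move=> [<- <-]; by split => //; split => // r [<-].
  + move=> H; have [H1 [H2 H3]] := IH _ H; split => //; split => // r Hr.
    have := H3 r Hr; rewrite size_rcons; exact: ltnW.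
- by move=> [<- <-]; split => //; split.
Qed.

Lemma good s t : Inv s t -> forall p e, List.In e (edges (aapply s p t)) ->
  e.1.2 <> e.2.2 -> G1 e.1.1 -> G2 e.2.1 -> False.
Proof.
elim => [x|X w Hw IH Hc|f ts Hts IH Hn] p e.
- move=> /= H; have [e0 [_ ->]] := edges_map H; by [].
- move=> /= H; case: (edges_plug H) => [H1|[H1|[lf [r [H1 [H2 ->]]]]]].
  + have [e0 [_ ->]] := edges_map H1; by [].
  + exact: IH H1.
  + have [l0 [Hf ->]] := hole_father_map H1.
    case: r H2 => rl ro H2 /= _ G1l G2r.
    have [Hr _] := root_aapply H2.
    exact: (Hc l0 Hf G1l (Hr G2r)).
- rewrite aapply_App => H; have [T [HT H']] := edges_NodeP H.
  have [c [q [Hc [ET _]]]] := In_aargs HT; subst T.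
  case: H' => [[[l' o'] [Hr ->]]|H'] /=.
  + move=> Hne G1f G2l; have [_ [Hne' _]] := root_aapply Hr.
    apply: (Hn G1f c Hc); apply: Hne' => //; by move=> E; apply: Hne.
  + exact: IH H'.
Qed.

Lemma Inv_noncrossing s u v : Inv s u -> Inv s v -> noncrossing G1 G2 s u v.
Proof.
move=> Hu Hv a b Ha Hb; split => [[o1 [o2 [H Hne]]]|[o1 [o2 [H Hne]]]].
- exact: (good Hu H).
- exact: (good Hv H).
Qed.


Lemma Inv_App1 s a t : Inv s t -> ~ nonexpl s t -> Inv s (App a [:: t]).
Proof. move=> H1 H2; apply: IApp => [c [<-|[]]|_ c [<-|[]]] //. Qed.

Lemma Inv_App1' s b t : ~~ G1 b -> Inv s t -> Inv s (App b [:: t]).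
Proof. move=> Hb H1; apply: IApp => [c [<-|[]]|H] //; by rewrite H in Hb. Qed.

Lemma not_root (t : tree Sigma) : (forall l, root_label t = Some l -> ~~ G2 l) ->
  ~ match root_label t with Some l => G2 l | None => False end.
Proof. case: (root_label t) => [l H|_ []]; have := H l erefl; by move/negP. Qed.

Section Trans.
Variables (c : choices) (s' : subst).
Hypothesis HS1 : forall X, ~~ G1 (last_letter c X) -> forall l, hole_father (sctx s' X) l -> ~~ G1 l.
Hypothesis HS2 : forall X, ~~ G2 (first_letter c X) -> forall l, root_label (sctx s' X) = Some l -> ~~ G2 l.
Hypothesis HV : forall x, ~~ G2 (first_letter_var c x) -> forall l, root_label (svar s' x) = Some l -> ~~ G2 l.

Lemma NE t : ~ nonexpl s' (transform G1 G2 c t).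
Proof.
elim: t => [x|X w IH|f ts] //.
- rewrite /transform /=; case Hb: (G2 (first_letter_var c x)) => /=; first by move=> [].
  apply: not_root => l E; apply: (@HV x _ l E); by rewrite Hb.
- rewrite /transform /=.
  case Ha: (G1 (last_letter c X)); case: (remove1 c X) => /=;
  case Hb: (G2 (first_letter c X)); case: (remove2 c X) => /=.
  all: try by move=> [].
  all: case E: (sctx s' X) => [l ts|] /=.
  all: try by move=> [].
  all: try exact: IH.
  all: have H := @HS2 X _ l; rewrite E Hb in H; apply/negP; exact: H.
Qed.

Lemma InvT t : Inv s' (transform G1 G2 c t).
Proof.
elim/term_ind': t => [x|X w IH|f ts IH].
- rewrite /transform /=; case Hb: (G2 (first_letter_var c x)); last exact: IVar.
  apply: Inv_App1'; last exact: IVar.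
  by apply/negP => H; exact: Hdisj H Hb.
- have NEw := @NE w.
  rewrite /transform /=.
  case Ha: (G1 (last_letter c X)); case: (remove1 c X) => /=;
  case Hb: (G2 (first_letter c X)); case: (remove2 c X) => /=.
  all: try (apply: Inv_App1'; first by apply/negP => H; exact: Hdisj H Hb).
  all: try (apply: Inv_App1; [exact: IH|exact: NEw]).
  all: try exact: IH.
  all: try apply: ICApp; try (apply: Inv_App1; [exact: IH|exact: NEw]); try exact: IH.
  all: try (move=> l Hl G1l /=; first [by move=> H; exact: Hdisj Ha H | by have := @HS1 X (negbT Ha) l Hl; rewrite G1l]).
- rewrite /transform /=; apply: IApp => [t' Ht'|_ t' Ht'].
  + rewrite -map_comp in Ht'; have [t [Ht ->]] := In_map_inv Ht'; exact: IH.
  + rewrite -map_comp in Ht'; have [t [Ht ->]] := In_map_inv Ht'; exact: NE.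
Qed.

End Trans.

Lemma transform_App (c : choices) f ts :
  transform G1 G2 c (App f ts) = App f (map (transform G1 G2 c) ts).
Proof. by rewrite /transform /= -map_comp. Qed.

Lemma occ_transform (c : choices) t X : occurs_cv X (transform G1 G2 c t) ->
  occurs_cv X t /\ ~ (G1 (last_letter c X) /\ remove1 c X) /\ ~ (G2 (first_letter c X) /\ remove2 c X).
Proof.
elim/term_ind': t => [x|Y w IH|f ts IH].
- rewrite /transform /=; case: (G2 (first_letter_var c x)) => /=; by [case|].
- rewrite /transform /=.
  case Ha: (G1 (last_letter c Y)); case Hr1: (remove1 c Y) => /=;
  case Hb: (G2 (first_letter c Y)); case Hr2: (remove2 c Y) => /=.
  all: move=> H; repeat match goal with
    | H : _ \/ False |- _ => case: H => [H|[]]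
    | H : _ = _ \/ _ |- _ => case: H => [E|H]
    | H : False \/ _ |- _ => case: H => [[]|H] end.
  all: try (have [H1 H2] := IH H; split; [by right|exact: H2]).
  all: subst Y; split; [by left|].
  all: rewrite ?Ha ?Hb ?Hr1 ?Hr2; by split => -[].
- rewrite transform_App => H.
  have [t' [Ht' H']] := occurs_AppE H.
  have [t [Ht E]] := In_map_inv Ht'; subst t'.
  have [H1 H2] := IH t Ht H'; split => //; exact: occurs_App Ht H1.
Qed.


Lemma sumn_pos_In (A : Type) (f : A -> nat) s : 0 < sumn (map f s) -> exists c, List.In c s /\ 0 < f c.
Proof.
elim: s => [|c r IH] //=; case E: (f c) => [|k] /=.
- move=> /IH [c' [H1 H2]]; exists c'; split => //; by right.
- by move=> _; exists c; split; [left|rewrite E].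
Qed.

Lemma hf_exists (t : tree Sigma) : 0 < holes t -> t <> Hole -> exists l, hole_father t l.
Proof.
elim/tree_ind': t => [//|l ts IH] Hp _.
have [c [Hc Hpc]] := sumn_pos_In Hp.
case: c Hc Hpc => [l0 ts0|] Hc Hpc.
- have [l' Hl'] := IH _ Hc Hpc (fun E => ltac:(discriminate E)).
  exists l'; exact: (HF_deep _ Hc Hl').
- exists l; exact: HF_here.
Qed.

Lemma dec2 (D : tree Sigma) : ground_context arity D -> D <> Hole ->
  exists b r2 C', ground_context arity C' /\ D = Kc b r2 C' /\
    (~~ G2 b -> forall l, root_label C' = Some l -> ~~ G2 l) /\
    (C' <> Hole \/ (G2 b /\ r2)) /\
    (forall l, hole_father C' l -> hole_father D l).
Proof.
case: D => [b ts|] // [Hr Hh] _.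
case Hb: (G2 b).
- have Hs : size ts = 1 by rewrite (proj1 Hr) HG2.
  case: ts Hs Hr Hh => [|D2 [|? ?]] // _ Hr Hh.
  have gD2 : ground_context arity D2.
    split; [by case: Hr => _ [] | by move: Hh; rewrite /= addn0].
  have [E|NE] : D2 = Hole \/ D2 <> Hole by case: (D2) => [? ?|]; [right|left].
  + subst D2; exists b, true, Hole; rewrite /Kc Hb; split => //; split => //; split => //; split.
    * by right.
    * by move=> l H; inversion H.
  + exists b, false, D2; rewrite /Kc Hb; split => //; split => //; split => //; split.
    * by left.
    * move=> l H; apply: HF_deep H; by left.
- exists b, false, (Node b ts); rewrite /Kc Hb; split => //; split => //; split.
  + by move=> _ l [<-]; rewrite Hb.
  + by split; [left|].
Qed.

Lemma spec_ctx (C : tree Sigma) : ground_context arity C -> C <> Hole ->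
  exists a r1 b r2 C', ground_context arity C' /\ C = Rc a r1 b r2 C' /\
    (~~ G1 a -> forall l, hole_father C' l -> ~~ G1 l) /\
    (~~ G2 b -> forall l, root_label C' = Some l -> ~~ G2 l) /\
    (~ (G1 a /\ r1) -> ~ (G2 b /\ r2) -> C' <> Hole).
Proof.
move=> gC nH.
case: (dec1 HG1 gC) => [[C1 [a [Pa [E gC1]]]]|HR].
- case EC1: C1 => [l1 ts1|].
  + have [b [r2 [C' [gC' [EK [S2 [S3 _]]]]]]] := dec2 gC1 ltac:(by rewrite EC1).
    exists a, false, b, r2, C'; split => //; split.
    * by rewrite /Rc Pa -EK.
    * split; first by rewrite Pa.
      split => // _ H; case: S3 => // -[H1 H2]; by case: H.
  + exists a, true, a, false, Hole; split => //; split.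
    * by rewrite /Rc Pa E EC1.
    * split; first by rewrite Pa.
      split => // H; by case: H.
- have hC : 0 < holes C by case: gC => _ ->.
  have [l0 Hl0] := hf_exists hC nH.
  have Nl0 := HR _ Hl0.
  have [b [r2 [C' [gC' [EK [S2 [S3 S4]]]]]]] := dec2 gC nH.
  exists l0, false, b, r2, C'; split => //; split.
  + by rewrite /Rc (negbTE Nl0).
  + split; first by move=> _ l H; apply: HR; exact: S4.
    split => // _ H; case: S3 => // -[H1 H2]; by case: H.
Qed.

Lemma spec_var (t : tree Sigma) : ground_term arity t ->
  exists b t', ground_term arity t' /\ t = Rv b t' /\
    (~~ G2 b -> forall l, root_label t' = Some l -> ~~ G2 l).
Proof.
case: t => [b ts|] [Hr Hh] //.
case Hb: (G2 b).
- have Hs : size ts = 1 by rewrite (proj1 Hr) HG2.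
  case: ts Hs Hr Hh => [|t' [|? ?]] // _ Hr Hh.
  exists b, t'; rewrite /Rv Hb; split; last by split.
  split; [by case: Hr => _ [] | by move: Hh; rewrite /= addn0].
- exists b, (Node b ts); rewrite /Rv Hb; split => //; split => //.
  by move=> _ l [<-]; rewrite Hb.
Qed.

Definition specX (C : tree Sigma) (dd : Sigma * bool * Sigma * bool * tree Sigma) : Prop :=
  ground_context arity dd.2 /\
  (C <> Hole -> C = Rc dd.1.1.1.1 dd.1.1.1.2 dd.1.1.2 dd.1.2 dd.2) /\
  (~~ G1 dd.1.1.1.1 -> forall l, hole_father dd.2 l -> ~~ G1 l) /\
  (~~ G2 dd.1.1.2 -> forall l, root_label dd.2 = Some l -> ~~ G2 l) /\
  (C <> Hole -> ~ (G1 dd.1.1.1.1 /\ dd.1.1.1.2) -> ~ (G2 dd.1.1.2 /\ dd.1.2) -> dd.2 <> Hole).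

Definition specV (t : tree Sigma) (dd : Sigma * tree Sigma) : Prop :=
  ground_term arity dd.2 /\ t = Rv dd.1 dd.2 /\
  (~~ G2 dd.1 -> forall l, root_label dd.2 = Some l -> ~~ G2 l).

Lemma part_b (u v : term) (s : subst) :
  solution arity s u v -> nonempty s u v ->
  exists (c : choices) (s' : subst),
    let u' := transform G1 G2 c u in
    let v' := transform G1 G2 c v in
    [/\ solution arity s' u' v', nonempty s' u' v',
        apply s' u' = apply s u & noncrossing G1 G2 s' u' v'].
Proof.
move=> [[HXc Hxt] Euv] Hne.
have [d0 _] : exists d : Sigma, True.
{ elim: u {Euv Hne} => [x|X w IH|f ts]; last by exists f.
  - case: (svar s x) (Hxt x) => [l ts|] [_ Hh] //; by exists l.
  - exact: IH. }
have HX : forall X, exists dd, specX (sctx s X) dd.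
{ move=> X; case E: (sctx s X) => [l ts|].
  - have [a [r1 [b [r2 [C' [H1 [H2 [H3 [H4 H5]]]]]]]]] := spec_ctx (HXc X) ltac:(by rewrite E).
    exists (a, r1, b, r2, C'); rewrite -E; split => //; split => //.
  - exists (d0, false, d0, false, Hole); split; first exact: gc_hole.
    split; first by move=> H; case: H.
    split; first by move=> _ l H; inversion H.
    split; first by [].
    by move=> H; case: H. }
have Hx : forall x, exists dd, specV (svar s x) dd.
{ move=> x; have [b [t' [H1 [H2 H3]]]] := spec_var (Hxt x); by exists (b, t'). }
pose fX := fun X => proj1_sig (constructive_indefinite_description _ (HX X)).
have hfX : forall X, specX (sctx s X) (fX X) := fun X => proj2_sig (constructive_indefinite_description _ (HX X)).
pose fx := fun x => proj1_sig (constructive_indefinite_description _ (Hx x)).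
have hfx : forall x, specV (svar s x) (fx x) := fun x => proj2_sig (constructive_indefinite_description _ (Hx x)).
pose c : choices := Choices (fun X => (fX X).1.1.1.1) (fun X => (fX X).1.1.1.2)
   (fun X => (fX X).1.1.2) (fun X => (fX X).1.2) (fun x => (fx x).1).
pose s' : subst := Subst (fun X => (fX X).2) (fun x => (fx x).2).
have HA : forall t, (forall X, occurs_cv X t -> sctx s X <> Hole) ->
    apply s' (transform G1 G2 c t) = apply s t.
{ move=> t Ht; apply: apply_transform.
  - move=> X HXo; have [_ [H2 _]] := hfX X; exact: (H2 (Ht X HXo)).
  - move=> x; have [_ [H2 _]] := hfx x; exact: H2. }
have HAu := HA u (fun X H => Hne X (or_introl H)).
have HAv := HA v (fun X H => Hne X (or_intror H)).
have HS1 : forall X, ~~ G1 (last_letter c X) -> forall l, hole_father (sctx s' X) l -> ~~ G1 l.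
{ move=> X; have [_ [_ [H _]]] := hfX X; exact: H. }
have HS2 : forall X, ~~ G2 (first_letter c X) -> forall l, root_label (sctx s' X) = Some l -> ~~ G2 l.
{ move=> X; have [_ [_ [_ [H _]]]] := hfX X; exact: H. }
have HV : forall x, ~~ G2 (first_letter_var c x) -> forall l, root_label (svar s' x) = Some l -> ~~ G2 l.
{ move=> x; have [_ [_ H]] := hfx x; exact: H. }
exists c, s'; split.
- split; last by rewrite HAu HAv.
  split => [X|x]; [by have [H _] := hfX X | by have [H _] := hfx x].
- move=> X HXo.
  have [Hu [N1 N2]] : (occurs_cv X u \/ occurs_cv X v) /\
      ~ (G1 (last_letter c X) /\ remove1 c X) /\ ~ (G2 (first_letter c X) /\ remove2 c X).
  { case: HXo => H; have [H1 H2] := occ_transform H.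
    - split; [by left|exact: H2].
    - split; [by right|exact: H2]. }
  have [_ [_ [_ [_ H5]]]] := hfX X; exact: (H5 (Hne X Hu) N1 N2).
- exact: HAu.
- apply: Inv_noncrossing; exact: InvT.
Qed.

End Main.

Theorem lemma5p1 (Sigma V CV : Type) (arity : Sigma -> nat) (G1 G2 : pred Sigma) :
  (forall a, G1 a -> arity a = 1) ->
  (forall a, G2 a -> arity a = 1) ->
  (forall a, G1 a -> G2 a -> False) ->
  forall u v : term Sigma V CV,
  wf_term arity u -> wf_term arity v ->
  (forall c : choices Sigma V CV,
     (exists s' : subst Sigma V CV,
        solution arity s' (transform G1 G2 c u) (transform G1 G2 c v)) ->
     exists s : subst Sigma V CV, solution arity s u v) /\
  (forall s : subst Sigma V CV,
     solution arity s u v -> nonempty s u v ->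
     exists (c : choices Sigma V CV) (s' : subst Sigma V CV),
       let u' := transform G1 G2 c u in
       let v' := transform G1 G2 c v in
       [/\ solution arity s' u' v', nonempty s' u' v',
           apply s' u' = apply s u & noncrossing G1 G2 s' u' v']).
Proof.
move=> HG1 HG2 Hd u v _ _; split => [c|s].
- exact: (part_a HG1 HG2).
- exact: (part_b HG1 HG2 Hd).
Qed.
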